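(* Let $R$ be a commutative ring with nonzero identity, $\delta$ and $\gamma$ expansions of ideals of $R$, and $I$ a proper ideal of $R$. (1) If $\delta(I)$ is an $n$-ideal of $R$, then $I$ is a $\delta$-$n$-ideal of $R$. Conversely, if $\delta=\delta_1$ and $I$ is a $\delta_1$-$n$-ideal, then $\delta_1(I)=\sqrt{I}$ is an $n$-ideal of $R$. (2) If $\delta(J)\subseteq\gamma(J)$ for all ideals $J$ of $R$ and $I$ is a $\delta$-$n$-ideal of $R$, then $I$ is a $\gamma$-$n$-ideal of $R$. (3) If $\gamma(I)$ is a $\delta$-$n$-ideal of $R$, then $I$ is a $\delta\circ\gamma$-$n$-ideal of $R$.
   Context: An expansion of ideals of a ring $R$ is a map $\delta$ from the set of ideals of $R$ to itself such that $I\subseteq\delta(I)$ for every ideal $I$, and $\delta(I)\subseteq\delta(J)$ whenever $I\subseteq J$. $\sqrt{0}$ denotes the nilradical of $R$, and $\delta_1$ is the expansion $\delta_1(J)=\sqrt{J}$. Given an expansion $\delta$, a proper ideal $I$ of $R$ is a $\delta$-$n$-ideal if whenever $a,b\in R$ with $ab\in I$ and $a\notin\sqrt{0}$, then $b\in\delta(I)$. An $n$-ideal is a proper ideal $I$ such that $ab\in I$ and $a\notin\sqrt{0}$ imply $b\in I$. *)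

(* Defs.v *)
From mathcomp Require Import all_boot all_algebra.
Set Implicit Arguments. Unset Strict Implicit. Unset Printing Implicit Defensive.
Import GRing.Theory.
Local Open Scope ring_scope.


Definition is_idl {R : comNzRingType} (I : R -> Prop) : Prop :=
  [/\ I 0, (forall x y, I x -> I y -> I (x + y)) & (forall r x, I x -> I (r * x))].

Definition proper_idl {R : comNzRingType} (I : R -> Prop) : Prop := is_idl I /\ ~ I 1.

Definition psubset {R : comNzRingType} (I J : R -> Prop) : Prop := forall x, I x -> J x.

Definition ideal_expansion {R : comNzRingType} (d : (R -> Prop) -> (R -> Prop)) : Prop :=
  [/\ (forall I, is_idl I -> is_idl (d I)),
      (forall I, is_idl I -> psubset I (d I)) &
      (forall I J, is_idl I -> is_idl J -> psubset I J -> psubset (d I) (d J))].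

Definition in_nilrad {R : comNzRingType} (x : R) : Prop := exists n : nat, x ^+ n = 0.

(* radical sqrt(J); delta_1 J = ideal_rad J *)
Definition ideal_rad {R : comNzRingType} (J : R -> Prop) (x : R) : Prop := exists n : nat, J (x ^+ n).

Definition is_n_ideal {R : comNzRingType} (I : R -> Prop) : Prop :=
  proper_idl I /\ forall a b, I (a * b) -> ~ in_nilrad a -> I b.

Definition is_delta_n_ideal {R : comNzRingType} (d : (R -> Prop) -> (R -> Prop)) (I : R -> Prop) : Prop :=
  proper_idl I /\ forall a b, I (a * b) -> ~ in_nilrad a -> d I b.

(* Main.v *)
Require Import Defs.
From mathcomp Require Import all_boot all_algebra.
From mathcomp Require Import zify.
Set Implicit Arguments. Unset Strict Implicit. Unset Printing Implicit Defensive.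
Import GRing.Theory.
Local Open Scope ring_scope.

Lemma idl_sum (R : comNzRingType) (I : R -> Prop) n (F : nat -> R) :
  is_idl I -> (forall i, (i < n)%N -> I (F i)) -> I (\sum_(0 <= i < n) F i).
Proof.
move=> [I0 ID IM] H.
elim: n H => [|n IH] H; first by rewrite big_nil.
rewrite big_nat_recr //=; apply: ID; first by apply: IH => i Hi; apply: H; exact: ltnW.
exact: H.
Qed.

Lemma rad_idl (R : comNzRingType) (I : R -> Prop) : is_idl I -> is_idl (ideal_rad I).
Proof.
move=> HI; have [I0 ID IM] := HI; split.
- by exists 1%N; rewrite expr1.
- move=> x y [n Hn] [m Hm]; exists (n + m)%N.
  rewrite exprDn; apply: (big_ind I) => //= i _.
  rewrite -mulr_natl; apply: (IM).
  case: (leqP m i) => Hmi.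
  + have -> : y ^+ i = y ^+ (i - m) * y ^+ m by rewrite -exprD subnK.
    rewrite mulrA; exact: IM.
  + have Hle : (n <= n + m - i)%N.
      by move: Hmi; lia.
    have -> : x ^+ (n + m - i) = x ^+ (n + m - i - n) * x ^+ n by rewrite -exprD subnK.
    rewrite mulrAC; exact: IM.
- move=> r x [n Hn]; exists n; rewrite exprMn; exact: IM.
Qed.

Theorem proposition2p16 (R : comNzRingType)
  (d g : (R -> Prop) -> (R -> Prop)) (I : R -> Prop) :
  ideal_expansion d -> ideal_expansion g -> proper_idl I ->
  [/\ (is_n_ideal (d I) -> is_delta_n_ideal d I),
      (is_delta_n_ideal (@ideal_rad R) I -> is_n_ideal (@ideal_rad R I)),
      ((forall J, is_idl J -> psubset (d J) (g J)) ->
         is_delta_n_ideal d I -> is_delta_n_ideal g I) &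
      (is_delta_n_ideal d (g I) -> is_delta_n_ideal (fun J => d (g J)) I)].
Proof.
move=> [dI dE dM] [gI gE gM] [HI HI1]; split.
- move=> [_ H]; split => // a b Hab Ha; apply: H Ha; exact: dE.
- move=> [_ H]; split.
    split; first exact: rad_idl.
    by move=> [n]; rewrite expr1n.
  move=> a b [n Hn] Ha.
  rewrite exprMn in Hn.
  have Han : ~ in_nilrad (a ^+ n).
    by move=> [k Hk]; apply: Ha; exists (n * k)%N; rewrite exprM.
  have [m Hm] := H _ _ Hn Han.
  by exists (n * m)%N; rewrite exprM.
- move=> Hdg [P H]; split => // a b Hab Ha; apply: Hdg => //; exact: H Hab Ha.
- move=> [P H]; split; first by split.
  move=> a b Hab Ha; apply: H Ha; exact: gE.
Qed.
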